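(* For every reduction $S$ in a TRS the following equivalences hold: (i) $S$ starting in $s$ is weakly $p$-continuous and total iff $S$ starting in $s$ is weakly $m$-continuous; and (ii) $S$ weakly $p$-converges from $s$ to $t$ and is total iff $S$ weakly $m$-converges from $s$ to $t$.
   Context: A TRS $\mathcal{R}=(\Sigma,R)$ has rules $l\to r$ over possibly infinite terms. Total terms are the (possibly infinite) terms over $\Sigma$ and variables; partial terms are terms over $\Sigma_\bot=\Sigma\uplus\{\bot\}$. The order $s\le_\bot t$ holds iff $s$ is obtained from $t$ by replacing some subterm occurrences by $\bot$; partial terms with $\le_\bot$ form a complete semilattice. For a non-empty sequence $(a_\iota)_{\iota<\alpha}$ its limit inferior is $\liminf_{\iota\to\alpha}a_\iota=\bigvee_{\beta<\alpha}\bigwedge_{\beta\le\iota<\alpha}a_\iota$ (least upper bound over $\beta$ of greatest lower bounds of the tails). On total terms, $d(s,t)=2^{-k}$ with $k$ the minimal depth at which $s,t$ differ ($d(s,s)=0$); this is a complete ultrametric. A reduction is a transfinite sequence of steps $S=(t_\iota\to_{\pi_\iota}t_{\iota+1})_{\iota<\alpha}$ (for partial terms, in $(\Sigma_\bot,R)$). $S$ is weakly $p$-continuous if $\liminf_{\iota\to\lambda}t_\iota=t_\lambda$ for every limit $\lambda<\alpha$, and weakly $p$-converges to $t$ if it is weakly $p$-continuous and $t=\liminf_{\iota\to\hat\alpha}t_\iota$ (with $\hat\alpha=\alpha+1$ if $S$ is closed, $\alpha$ if open, so for closed $S$, $t$ is its last term). Weak $m$-continuity/convergence are defined identically with the metric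 limit $\lim$ in place of $\liminf$ (and total terms). ''Total'' means all terms of $S$ (and the final term $t$) are total. *)

(* Defs.v *)
From Stdlib Require Import Reals List Arith.
Import ListNotations.
Open Scope R_scope.
Set Implicit Arguments.

Inductive sym (F V : Type) : Type :=
| Fun : F -> sym F V
| Var : V -> sym F V
| Bot : sym F V.
Arguments Fun {F V} _.
Arguments Var {F V} _.
Arguments Bot {F V}.

(* A (possibly infinite) term is given by its labelling of positions
   (positions = lists of child indices, root = []); None = not a position. *)
Definition term (F V : Type) := list nat -> option (sym F V).

Section Terms.
Variables (F V : Type) (ar : F -> nat).

Definition arity_sym (s : sym F V) : nat :=
  match s with Fun f => ar f | _ => 0 end.

Definition wf (t : term F V) : Prop :=
  t [] <> None /\
  forall p i, t (p ++ [i]) <> None <-> exists s, t p = Some s /\ (i < arity_sym s)%nat.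

Definition total (t : term F V) : Prop := forall p, t p <> Some Bot.

Definition le_bot (s t : term F V) : Prop :=
  forall p, s p <> None -> s p = t p \/ (s p = Some Bot /\ t p <> None).

Definition is_glb (A : term F V -> Prop) (g : term F V) : Prop :=
  wf g /\ (forall u, A u -> le_bot g u) /\
  (forall h, wf h -> (forall u, A u -> le_bot h u) -> le_bot h g).

Definition is_lub (A : term F V -> Prop) (g : term F V) : Prop :=
  wf g /\ (forall u, A u -> le_bot u g) /\
  (forall h, wf h -> (forall u, A u -> le_bot u h) -> le_bot g h).

Definition differ_at_depth (s t : term F V) (k : nat) : Prop :=
  exists p, length p = k /\ s p <> t p.

Definition dist (s t : term F V) (r : R) : Prop :=
  ((forall p, s p = t p) /\ r = 0) \/
  (exists k, differ_at_depth s t k /\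
             (forall j, (j < k)%nat -> ~ differ_at_depth s t j) /\
             r = (/ 2) ^ k).

(* instance l sigma, read at position q ++ p of l *)
Fixpoint inst_aux (l : term F V) (sigma : V -> term F V) (q p : list nat)
  : option (sym F V) :=
  match l q with
  | Some (Var x) => sigma x p
  | Some s => match p with
              | [] => Some s
              | i :: p' => inst_aux l sigma (q ++ [i]) p'
              end
  | None => None
  end.

Definition inst (l : term F V) (sigma : V -> term F V) : term F V :=
  fun p => inst_aux l sigma [] p.

Fixpoint strip (pi p : list nat) : option (list nat) :=
  match pi, p with
  | [], _ => Some p
  | i :: pi', j :: p' => if Nat.eqb i j then strip pi' p' else None
  | _ :: _, [] => None
  end.

Definition replace (t : term F V) (pi : list nat) (u : term F V) : term F V :=
  fun p => match strip pi p with Some q => u q | None => t p end.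

Definition is_trs (Rules : term F V * term F V -> Prop) : Prop :=
  forall l r, Rules (l, r) ->
    wf l /\ total l /\ wf r /\ total r /\
    (exists f, l [] = Some (Fun f)) /\
    (forall p x, r p = Some (Var x) -> exists q, l q = Some (Var x)).

Definition step (Rules : term F V * term F V -> Prop)
    (t : term F V) (pi : list nat) (t' : term F V) : Prop :=
  t pi <> None /\
  exists l r (sigma : V -> term F V),
    Rules (l, r) /\ (forall x, wf (sigma x)) /\
    (forall p, t (pi ++ p) = inst l sigma p) /\
    (forall p, t' p = replace t pi (inst r sigma) p).

End Terms.

Record wordinal := {
  ord :> Type;
  olt : ord -> ord -> Prop;
  olt_wf : well_founded olt;
  olt_trans : forall a b c, olt a b -> olt b c -> olt a c;
  olt_irrefl : forall a, ~ olt a a;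
  olt_total : forall a b, olt a b \/ a = b \/ olt b a
}.
Arguments olt {w} _ _.

Section Reductions.
Variables (F V : Type) (ar : F -> nat).
Context {W : wordinal}.

Definition ole (a b : W) : Prop := olt a b \/ a = b.
Definition is_zero (a : W) : Prop := forall b, ~ olt b a.
Definition succ_of (b a : W) : Prop :=          (* a = b + 1 *)
  olt b a /\ forall c, olt b c -> ole a c.
Definition is_limit (l : W) : Prop :=
  (exists b, olt b l) /\ forall b, olt b l -> exists c, olt b c /\ olt c l.

(* a reduction of length alpha is closed iff alpha is zero or a successor *)
Definition closed (alpha : W) : Prop := is_zero alpha \/ exists b, succ_of b alpha.

(* iota < alpha-hat, where alpha-hat = alpha+1 if closed, alpha otherwise *)
Definition below_hat (alpha iota : W) : Prop :=
  olt iota alpha \/ (closed alpha /\ iota = alpha).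

Definition is_liminf (P : W -> Prop) (T : W -> term F V) (u : term F V) : Prop :=
  is_lub ar (fun g => exists beta, P beta /\
                 is_glb ar (fun v => exists iota, P iota /\ ole beta iota /\ v = T iota) g)
         u.

Definition is_mlim (P : W -> Prop) (T : W -> term F V) (u : term F V) : Prop :=
  forall eps, 0 < eps -> exists beta, P beta /\
    forall iota, P iota -> ole beta iota -> forall r, dist (T iota) u r -> r < eps.

Definition is_reduction (Rules : term F V * term F V -> Prop)
    (alpha : W) (T : W -> term F V) (pos : W -> list nat) : Prop :=
  (forall iota, below_hat alpha iota -> wf ar (T iota)) /\
  (forall iota iota', olt iota alpha -> succ_of iota iota' ->
       step ar Rules (T iota) (pos iota) (T iota')).

Definition starts_in (T : W -> term F V) (s : term F V) : Prop :=
  forall z, is_zero z -> T z = s.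

Definition red_total (alpha : W) (T : W -> term F V) : Prop :=
  forall iota, below_hat alpha iota -> total (T iota).

Definition weakly_p_continuous (alpha : W) (T : W -> term F V) : Prop :=
  forall l, olt l alpha -> is_limit l -> is_liminf (fun iota => olt iota l) T (T l).

Definition weakly_p_converges (alpha : W) (T : W -> term F V) (t : term F V) : Prop :=
  weakly_p_continuous alpha T /\ is_liminf (below_hat alpha) T t.

(* metric notions live on total terms *)
Definition weakly_m_continuous (alpha : W) (T : W -> term F V) : Prop :=
  red_total alpha T /\
  forall l, olt l alpha -> is_limit l -> is_mlim (fun iota => olt iota l) T (T l).

Definition weakly_m_converges (alpha : W) (T : W -> term F V) (t : term F V) : Prop :=
  weakly_m_continuous alpha T /\ total t /\ is_mlim (below_hat alpha) T t.

End Reductions.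

(* Submission.v *)
Require Import Defs.
From Stdlib Require Import Reals List Arith Wf_nat Lia Lra Classical ClassicalEpsilon.
Import ListNotations.
Open Scope R_scope.

Lemma wf_child {F V} (ar : F -> nat) (t : term F V) p i :
  wf ar t -> t (p ++ [i]) <> None -> exists s, t p = Some s /\ (i < arity_sym ar s)%nat.
Proof. intros [_ H] H1. apply H; auto. Qed.

Lemma wf_prefix {F V} (ar : F -> nat) (t : term F V) p q :
  wf ar t -> t (p ++ q) <> None -> t p <> None.
Proof.
  intros Hw. revert p. induction q as [|i q IH] using rev_ind; intros p H.
  - rewrite app_nil_r in H; auto.
  - rewrite app_assoc in H. apply IH. destruct (wf_child ar t _ _ Hw H) as [s [Hs _]].
    congruence.
Qed.

Lemma wf_strict_prefix {F V} (ar : F -> nat) (t : term F V) p i r :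
  wf ar t -> t (p ++ i :: r) <> None -> exists s, t p = Some s /\ (i < arity_sym ar s)%nat.
Proof.
  intros Hw H. replace (p ++ i :: r) with ((p ++ [i]) ++ r) in H
    by (rewrite <- app_assoc; reflexivity).
  apply (wf_prefix ar) in H; auto. apply wf_child; auto.
Qed.

Lemma arity_pos_notbot {F V} (ar : F -> nat) (s : sym F V) i :
  (i < arity_sym ar s)%nat -> s <> Bot.
Proof. intros H ->. simpl in H. lia. Qed.

Lemma half_pow_le k m : (k <= m)%nat -> (/2)^m <= (/2)^k.
Proof.
  intros H. induction H. lra. simpl.
  assert (0 <= (/2)^m) by (apply pow_le; lra). lra.
Qed.

Lemma half_pow_pos k : 0 < (/2)^k.
Proof. apply pow_lt. lra. Qed.

Lemma small_pow eps : 0 < eps -> exists k, (/2)^k < eps.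
Proof.
  intros He. destruct (pow_lt_1_zero (/2)) with (y := eps) as [N HN]; auto.
  rewrite Rabs_right; lra.
  exists N. specialize (HN N (le_n _)). rewrite Rabs_right in HN; auto.
  apply Rle_ge, pow_le; lra.
Qed.

Lemma dist_exists {F V} (s t : term F V) : exists r, Defs.dist s t r.
Proof.
  destruct (classic (exists k, differ_at_depth s t k)) as [H|H].
  - assert (Hmin : exists k, differ_at_depth s t k /\ forall j, (j < k)%nat -> ~ differ_at_depth s t j).
    { destruct H as [k Hk]. revert Hk. induction k as [k IH] using (well_founded_induction lt_wf). intros Hk.
      destruct (classic (exists j, (j < k)%nat /\ differ_at_depth s t j)) as [[j [Hj1 Hj2]]|Hn].
      - apply (IH j Hj1 Hj2).
      - exists k. split; auto. intros j Hj Hd. apply Hn. eauto. }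
    destruct Hmin as [k [H1 H2]]. exists ((/2)^k). right. eauto.
  - exists 0. left. split; auto. intros p. apply NNPP. intros Hp. apply H.
    exists (length p), p. split; auto.
Qed.

Lemma dist_small {F V} (s t : term F V) r n :
  Defs.dist s t r -> r < (/2)^n -> forall q, (length q <= n)%nat -> s q = t q.
Proof.
  intros [[H _]|[k [Hk [Hmin ->]]]] Hr q Hq; auto.
  apply NNPP. intros Hne.
  destruct (Nat.lt_ge_cases (length q) k) as [Hl|Hl].
  - apply (Hmin _ Hl). exists q; split; auto.
  - assert ((/2)^n <= (/2)^k) by (apply half_pow_le; lia). lra.
Qed.

Lemma dist_agree {F V} (s t : term F V) r k :
  Defs.dist s t r -> (forall q, (length q <= k)%nat -> s q = t q) -> r <= (/2)^(S k).
Proof.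
  intros [[_ ->]|[m [[p [Hp1 Hp2]] [_ ->]]]] Hq.
  - left. apply half_pow_pos.
  - apply half_pow_le. destruct (Nat.le_gt_cases m k) as [Hl|Hl]; try lia.
    exfalso. apply Hp2, Hq. lia.
Qed.

Definition agree {F V} (A : term F V -> Prop) (q : list nat) : Prop :=
  forall a b, A a -> A b -> a q = b q.

Definition PA {F V} (A : term F V -> Prop) (p : list nat) : Prop :=
  forall q i r, p = q ++ i :: r -> agree A q.

Definition glbc {F V} (A : term F V -> Prop) (a0 : term F V) : term F V := fun p =>
  if excluded_middle_informative (PA A p) then
    if excluded_middle_informative (agree A p) then a0 p else Some Bot
  else None.

Lemma PA_nil {F V} (A : term F V -> Prop) : PA A [].
Proof. intros q i r H. destruct q; discriminate. Qed.

Lemma PA_snoc {F V} (A : term F V -> Prop) p i :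
  PA A (p ++ [i]) <-> PA A p /\ agree A p.
Proof.
  split.
  - intros H. split.
    + intros q j r ->. apply (H q j (r ++ [i])). rewrite <- app_assoc. reflexivity.
    + apply (H p i []). reflexivity.
  - intros [H1 H2] q j r Heq.
    destruct r as [|k r] using rev_ind.
    + apply app_inj_tail in Heq. destruct Heq as [-> _]. auto.
    + apply (H1 q j r). replace (q ++ j :: r ++ [k]) with ((q ++ j :: r) ++ [k]) in Heq
        by (rewrite <- app_assoc; reflexivity).
      apply app_inj_tail in Heq. destruct Heq; auto.
Qed.

Lemma glbc_spec {F V} (ar : F -> nat) (A : term F V -> Prop) a0 :
  A a0 -> (forall a, A a -> wf ar a) -> is_glb ar A (glbc A a0).
Proof.
  intros H0 Hwf. unfold glbc.
  assert (Hall : forall p a, PA A p -> ~ agree A p -> A a -> a p <> None).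
  { intros p a Hp Hn Ha Hap. apply Hn. destruct p as [|i p _] using rev_ind.
    - destruct (Hwf a Ha) as [Hr _]. congruence.
    - apply PA_snoc in Hp. destruct Hp as [_ Hag].
      intros b c Hb Hc.
      assert (Hb' : b (p ++ [i]) = None).
      { destruct (b (p ++ [i])) eqn:E; auto. exfalso.
        destruct (wf_child ar b p i (Hwf b Hb)) as [s0 [Hs Hi]]; [congruence|].
        rewrite (Hag b a Hb Ha) in Hs.
        assert (a (p++[i]) <> None) by (apply (proj2 (Hwf a Ha)); eauto). congruence. }
      assert (Hc' : c (p ++ [i]) = None).
      { destruct (c (p ++ [i])) eqn:E; auto. exfalso.
        destruct (wf_child ar c p i (Hwf c Hc)) as [s0 [Hs Hi]]; [congruence|].
        rewrite (Hag c a Hc Ha) in Hs.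
        assert (a (p++[i]) <> None) by (apply (proj2 (Hwf a Ha)); eauto). congruence. }
      congruence. }
  split; [|split].
  - split.
    + destruct (excluded_middle_informative (PA A [])) as [_|n]; [|exfalso; apply n, PA_nil].
      destruct (excluded_middle_informative (agree A [])); [|discriminate].
      apply (Hwf a0 H0).
    + intros p i. split.
      * destruct (excluded_middle_informative (PA A (p ++ [i]))) as [Hp|]; [|tauto].
        pose proof Hp as Hp'. apply PA_snoc in Hp'. destruct Hp' as [Hp1 Hp2].
        destruct (excluded_middle_informative (PA A p)) as [_|n]; [|tauto].
        destruct (excluded_middle_informative (agree A p)) as [_|n]; [|tauto].
        intros Hne. apply (Hwf a0 H0).
        destruct (excluded_middle_informative (agree A (p ++ [i]))) as [Ha|Hn]; auto.
      * intros [s [Hs Hi]].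
        destruct (excluded_middle_informative (PA A p)) as [Hp|]; [|discriminate].
        destruct (excluded_middle_informative (agree A p)) as [Ha|].
        2:{ inversion Hs; subst. simpl in Hi. lia. }
        destruct (excluded_middle_informative (PA A (p ++ [i]))) as [Hp'|n].
        2:{ exfalso; apply n, PA_snoc; auto. }
        destruct (excluded_middle_informative (agree A (p ++ [i]))); [|discriminate].
        apply (Hwf a0 H0). eauto.
  - intros a Ha p Hgp.
    destruct (excluded_middle_informative (PA A p)) as [Hp|]; [|tauto].
    destruct (excluded_middle_informative (agree A p)) as [Hag|Hn].
    + left. apply Hag; auto.
    + right. split; auto.
  - intros h Hh Hlow p Hhp.
    assert (Hp : PA A p).
    { intros q i r ->. destruct (wf_strict_prefix ar h q i r Hh Hhp) as [s [Hs Hi]].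
      apply arity_pos_notbot in Hi.
      assert (Hq : forall a, A a -> a q = h q).
      { intros a Ha. destruct (Hlow a Ha q) as [E|[E _]]; congruence. }
      intros a b Ha Hb. rewrite (Hq a Ha), (Hq b Hb); auto. }
    destruct (excluded_middle_informative (PA A p)) as [_|n]; [|tauto].
    destruct (excluded_middle_informative (agree A p)) as [Hag|Hn].
    + destruct (Hlow a0 H0 p Hhp) as [E|[E1 E2]]; [left; auto|].
      right. split; auto.
    + destruct (h p) as [s|] eqn:E; [|tauto].
      destruct (classic (s = Bot)) as [->|Hs].
      * left; auto.
      * exfalso. apply Hn. intros a b Ha Hb.
        destruct (Hlow a Ha p ltac:(congruence)) as [Ea|[Ea _]]; [|congruence].
        destruct (Hlow b Hb p ltac:(congruence)) as [Eb|[Eb _]]; [|congruence].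
        congruence.
Qed.

Lemma ole_trans {W : wordinal} (a b c : W) : ole a b -> ole b c -> ole a c.
Proof.
  intros [H1| ->] [H2| ->]; unfold ole; auto. left. eapply olt_trans; eauto.
Qed.

Lemma ole_refl {W : wordinal} (a : W) : ole a a.
Proof. right; auto. Qed.

Lemma ole_total {W : wordinal} (a b : W) : ole a b \/ ole b a.
Proof. destruct (olt_total _ a b) as [H|[H|H]]; unfold ole; auto. Qed.

Definition tail {F V} {W : wordinal} (P : W -> Prop) (T : W -> term F V) (beta : W) :=
  fun v => exists iota, P iota /\ ole beta iota /\ v = T iota.

Definition Good {F V} {W : wordinal} (P : W -> Prop) (T : W -> term F V) (u : term F V)
  (beta : W) (p : list nat) := forall iota, P iota -> ole beta iota -> T iota p = u p.

Lemma combine_good {F V} {W : wordinal} (P : W -> Prop) (T : W -> term F V) u (L : list (list nat)) :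
  (exists b, P b) ->
  (forall p, In p L -> exists beta, P beta /\ Good P T u beta p) ->
  exists beta, P beta /\ forall p, In p L -> Good P T u beta p.
Proof.
  intros [b0 Hb0]. induction L as [|p L IH]; intros H.
  - exists b0. split; auto. intros p [].
  - destruct IH as [b1 [Hb1 H1]]. { intros q Hq. apply H. right; auto. }
    destruct (H p (or_introl eq_refl)) as [b2 [Hb2 H2]].
    destruct (ole_total b1 b2) as [Ho|Ho].
    + exists b2. split; auto. intros q [<-|Hq]; auto.
      intros iota Hi Hle. apply (H1 q Hq iota Hi). eapply ole_trans; eauto.
    + exists b1. split; auto. intros q [<-|Hq]; auto.
      intros iota Hi Hle. apply (H2 iota Hi). eapply ole_trans; eauto.
Qed.

Definition children {F V} (ar : F -> nat) (t : term F V) (p : list nat) : list (list nat) :=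
  map (fun i => p ++ [i]) (seq 0 (match t p with Some s => arity_sym ar s | None => 0%nat end)).

Lemma finite_positions {F V} (ar : F -> nat) (t : term F V) k :
  wf ar t -> exists L, forall p, (length p <= k)%nat -> t p <> None -> In p L.
Proof.
  intros Hw. induction k as [|k [L HL]].
  - exists [[]]. intros p Hp _. destruct p; simpl in *; [auto|lia].
  - exists (L ++ flat_map (children ar t) L). intros p Hp Hn.
    apply in_or_app.
    destruct (Nat.le_gt_cases (length p) k) as [Hl|Hl]; [left; auto|right].
    destruct p as [|i p _] using rev_ind; [simpl in Hl; lia|].
    rewrite length_app in Hl, Hp. simpl in Hl, Hp.
    destruct (wf_child ar t p i Hw Hn) as [s [Hs Hi]].
    apply in_flat_map. exists p. split.
    + apply HL; [lia|congruence].
    + unfold children. rewrite Hs. apply (in_map (fun j => p ++ [j])), in_seq. lia.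
Qed.

Definition trunc {F V} (u : term F V) (p : list nat) : term F V := fun q =>
  if excluded_middle_informative (exists r, q = p ++ r) then
    if excluded_middle_informative (q = p) then Some Bot else None
  else u q.

Lemma snoc_extends (p q : list nat) i r :
  q ++ [i] = p ++ r -> r = [] \/ exists r', q = p ++ r'.
Proof.
  destruct r as [|j r _] using rev_ind; auto. intros H. right.
  rewrite app_assoc in H. apply app_inj_tail in H. destruct H as [-> _]. eauto.
Qed.

Lemma trunc_wf {F V} (ar : F -> nat) (u : term F V) p :
  wf ar u -> u p <> None -> wf ar (trunc u p).
Proof.
  intros Hw Hup. unfold trunc. split.
  - destruct (excluded_middle_informative (exists r, [] = p ++ r)) as [[r Hr]|Hn].
    + destruct (excluded_middle_informative ([] = p)); [discriminate|].
      exfalso. destruct p; [auto|discriminate].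
    + apply Hw.
  - intros q i.
    destruct (excluded_middle_informative (exists r, q ++ [i] = p ++ r)) as [[r Hr]|Hn].
    + destruct (snoc_extends p q i r Hr) as [->|[r' ->]].
      * rewrite app_nil_r in Hr. subst p.
        destruct (excluded_middle_informative (q ++ [i] = q ++ [i])) as [_|n]; [|tauto].
        destruct (excluded_middle_informative (exists r, q = (q ++ [i]) ++ r)) as [[r E]|_].
        { exfalso. apply (f_equal (@length nat)) in E. rewrite !length_app in E. simpl in E. lia. }
        split; [|congruence]. intros _. apply (proj2 Hw). auto.
      * destruct (excluded_middle_informative ((p ++ r') ++ [i] = p)) as [E|_].
        { exfalso. apply (f_equal (@length nat)) in E. rewrite !length_app in E. simpl in E. lia. }
        destruct (excluded_middle_informative (exists r, p ++ r' = p ++ r)) as [_|n]; [|exfalso; eauto].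
        split; [tauto|]. intros [s [Hs Hi]].
        destruct (excluded_middle_informative (p ++ r' = p)); inversion Hs; subst; simpl in Hi; lia.
    + destruct (excluded_middle_informative (exists r, q = p ++ r)) as [[r ->]|_].
      { exfalso. apply Hn. exists (r ++ [i]). rewrite app_assoc. auto. }
      apply Hw.
Qed.

Lemma liminf_good {F V} (ar : F -> nat) {W : wordinal} (P : W -> Prop) (T : W -> term F V) u :
  is_liminf ar P T u -> total u ->
  forall p, u p <> None -> exists beta, P beta /\ Good P T u beta p.
Proof.
  intros [Hwu [Hub Hleast]] Htot p Hp. apply NNPP. intros Hno.
  assert (HG : forall beta g, P beta -> is_glb ar (tail P T beta) g -> g p = u p ->
                 g p <> Some Bot -> False).
  { intros beta g Hb [_ [Hlow _]] E Hnb. apply Hno. exists beta. split; auto.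
    intros iota Hi Hle. assert (Hv : tail P T beta (T iota)) by (exists iota; auto).
    destruct (Hlow _ Hv p) as [E2|[E2 _]]; congruence. }
  assert (Hle : le_bot u (trunc u p)).
  { apply Hleast; [apply trunc_wf; auto; apply Hwu|].
    intros g [beta [Hb Hg]] q Hq. pose proof (Hub g (ex_intro _ beta (conj Hb Hg)) q Hq) as Hgu.
    unfold trunc.
    destruct (excluded_middle_informative (exists r, q = p ++ r)) as [[r ->]|Hn]; [|auto].
    destruct (excluded_middle_informative (p ++ r = p)) as [E|Ne].
    - rewrite E in *. destruct Hgu as [E1|[E1 _]].
      + exfalso. apply (HG beta g Hb Hg E1). intros E3. rewrite E3 in E1. apply (Htot p). auto.
      + left; auto.
    - destruct r as [|i r]; [rewrite app_nil_r in Ne; tauto|].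
      destruct (wf_strict_prefix ar g p i r (proj1 Hg) Hq) as [s [Hs Hi]].
      apply arity_pos_notbot in Hi.
      pose proof (Hub g (ex_intro _ beta (conj Hb Hg)) p ltac:(congruence)) as Hgp.
      destruct Hgp as [E1|[E1 _]]; [|congruence].
      exfalso. apply (HG beta g Hb Hg E1). congruence. }
  destruct (Hle p Hp) as [E|[E _]]; apply (Htot p).
  - rewrite E. unfold trunc.
    destruct (excluded_middle_informative (exists r, p = p ++ r)) as [_|n].
    2:{ exfalso. apply n. exists []. rewrite app_nil_r. auto. }
    destruct (excluded_middle_informative (p = p)); tauto.
  - auto.
Qed.

Lemma combine_gen {W : wordinal} (P : W -> Prop) (G : W -> list nat -> Prop) (L : list (list nat)) :
  (forall b b' p, G b p -> ole b b' -> G b' p) ->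
  (exists b, P b) ->
  (forall p, In p L -> exists beta, P beta /\ G beta p) ->
  exists beta, P beta /\ forall p, In p L -> G beta p.
Proof.
  intros Hmono [b0 Hb0]. induction L as [|p L IH]; intros H.
  - exists b0. split; auto. intros p [].
  - destruct IH as [b1 [Hb1 H1]]. { intros q Hq. apply H. right; auto. }
    destruct (H p (or_introl eq_refl)) as [b2 [Hb2 H2]].
    destruct (ole_total b1 b2) as [Ho|Ho].
    + exists b2. split; auto. intros q [<-|Hq]; eauto.
    + exists b1. split; auto. intros q [<-|Hq]; eauto.
Qed.

Lemma liminf_mlim {F V} (ar : F -> nat) {W : wordinal} (P : W -> Prop) (T : W -> term F V) u :
  (forall i, P i -> wf ar (T i)) -> is_liminf ar P T u -> total u -> is_mlim P T u.
Proof.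
  intros HwT Hli Htot eps Heps.
  assert (Hwu : wf ar u) by apply Hli.
  destruct (small_pow eps Heps) as [k Hk].
  destruct (finite_positions ar u k Hwu) as [L HL].
  destruct (liminf_good ar P T u Hli Htot [] (proj1 Hwu)) as [b0 [Hb0 _]].
  destruct (combine_gen P (fun b p => u p <> None -> Good P T u b p) L) as [beta [Hb HG]].
  { intros b b' p H Hle Hp iota Hi Hle'. apply H; auto. eapply ole_trans; eauto. }
  { eauto. }
  { intros p _. destruct (classic (u p = None)) as [E|E].
    - exists b0. split; auto. tauto.
    - destruct (liminf_good ar P T u Hli Htot p E) as [b [H1 H2]]. eauto. }
  exists beta. split; auto. intros iota Hi Hle r Hr.
  assert (Hag : forall q, (length q <= k)%nat -> T iota q = u q).
  { intros q. induction q as [|i q IH] using rev_ind; intros Hq.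
    - apply (HG [] (HL [] Hq (proj1 Hwu)) (proj1 Hwu)); auto.
    - destruct (classic (u (q ++ [i]) = None)) as [E|E].
      + rewrite E. destruct (T iota (q ++ [i])) eqn:E2; auto. exfalso.
        destruct (wf_child ar (T iota) q i (HwT iota Hi)) as [s0 [Hs Hi2]]; [congruence|].
        rewrite IH in Hs by (rewrite length_app in Hq; simpl in Hq; lia).
        destruct (proj2 Hwu q i) as [_ X]. apply X; eauto.
      + apply (HG _ (HL _ Hq E) E); auto. }
  pose proof (dist_agree _ _ r k Hr Hag).
  pose proof (half_pow_le k (S k) (le_S _ _ (le_n _))). lra.
Qed.

Lemma mlim_good {F V} {W : wordinal} (P : W -> Prop) (T : W -> term F V) u :
  is_mlim P T u -> forall n, exists beta, P beta /\
    forall iota, P iota -> ole beta iota -> forall q, (length q <= n)%nat -> T iota q = u q.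
Proof.
  intros Hm n. destruct (Hm ((/2)^n) (half_pow_pos n)) as [beta [Hb H]].
  exists beta. split; auto. intros iota Hi Hle q Hq.
  destruct (dist_exists (T iota) u) as [r Hr].
  apply (dist_small _ _ r n Hr); auto. apply (H iota Hi Hle r Hr).
Qed.

Lemma mlim_wf {F V} (ar : F -> nat) {W : wordinal} (P : W -> Prop) (T : W -> term F V) u :
  (forall i, P i -> wf ar (T i)) -> is_mlim P T u -> wf ar u.
Proof.
  intros HwT Hm. split.
  - destruct (mlim_good P T u Hm 0) as [b [Hb H]].
    rewrite <- (H b Hb (ole_refl b) [] (le_n _)). apply (HwT b Hb).
  - intros p i. destruct (mlim_good P T u Hm (S (length p))) as [b [Hb H]].
    rewrite <- (H b Hb (ole_refl b) (p ++ [i])) by (rewrite length_app; simpl; lia).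
    rewrite <- (H b Hb (ole_refl b) p) by lia.
    apply (HwT b Hb).
Qed.

Lemma mlim_liminf {F V} (ar : F -> nat) {W : wordinal} (P : W -> Prop) (T : W -> term F V) u :
  (forall i, P i -> wf ar (T i)) -> is_mlim P T u -> is_liminf ar P T u.
Proof.
  intros HwT Hm. pose proof (mlim_wf ar P T u HwT Hm) as Hwu.
  split; [auto|split].
  - intros g [beta [Hb [Hgw [Hlow _]]]] q Hq.
    destruct (mlim_good P T u Hm (length q)) as [b' [Hb' H]].
    assert (Hex : exists iota, P iota /\ ole beta iota /\ ole b' iota).
    { destruct (ole_total beta b') as [Ho|Ho].
      - exists b'. split; auto. split; auto. apply ole_refl.
      - exists beta. split; auto. split; auto. apply ole_refl. }
    destruct Hex as [iota [Hi [H1 H2]]].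
    assert (Hv : Submission.tail P T beta (T iota)) by (exists iota; auto).
    rewrite <- (H iota Hi H2 q (le_n _)). apply (Hlow _ Hv q Hq).
  - intros h Hh Hup p Hp.
    destruct (mlim_good P T u Hm (length p)) as [beta [Hb H]].
    set (g := glbc (Submission.tail P T beta) (T beta)).
    assert (Hg : is_glb ar (Submission.tail P T beta) g).
    { apply glbc_spec.
      - exists beta. split; auto. split; auto. apply ole_refl.
      - intros a [iota [Hi [_ ->]]]. auto. }
    assert (Htail : forall q, (length q <= length p)%nat -> agree (Submission.tail P T beta) q).
    { intros q Hq a c [i1 [Hi1 [Hl1 ->]]] [i2 [Hi2 [Hl2 ->]]].
      rewrite (H i1 Hi1 Hl1 q Hq), (H i2 Hi2 Hl2 q Hq). auto. }
    assert (Egp : g p = u p).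
    { unfold g, glbc.
      destruct (excluded_middle_informative (PA (Submission.tail P T beta) p)) as [_|n].
      2:{ exfalso. apply n. intros q i r ->. apply Htail. rewrite length_app. lia. }
      destruct (excluded_middle_informative (agree (Submission.tail P T beta) p)) as [_|n].
      2:{ exfalso. apply n, Htail. lia. }
      apply (H beta Hb (ole_refl _) p (le_n _)). }
    assert (Hfam : exists beta0, P beta0 /\ is_glb ar (Submission.tail P T beta0) g) by eauto.
    destruct (Hup g Hfam p ltac:(congruence)) as [E|[E1 E2]].
    + left. congruence.
    + right. split; congruence.
Qed.

Theorem theorem4p9 :
  forall (F V : Type) (ar : F -> nat) (Rules : term F V * term F V -> Prop),
    is_trs ar Rules ->
  forall (W : wordinal) (alpha : W) (T : W -> term F V) (pos : W -> list nat)
         (s : term F V),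
    is_reduction ar Rules alpha T pos -> starts_in T s ->
    ((weakly_p_continuous ar alpha T /\ red_total alpha T)
        <-> weakly_m_continuous alpha T) /\
    (forall t : term F V,
        (weakly_p_converges ar alpha T t /\ red_total alpha T /\ total t)
        <-> weakly_m_converges alpha T t).
Proof.
  intros F V ar Rules _ W alpha T pos s [Hwf _] _.
  assert (HwL : forall l, olt l alpha -> forall i, olt i l -> wf ar (T i)).
  { intros l Hl i Hi. apply Hwf. left. eapply olt_trans; eauto. }
  assert (Hi1 : weakly_p_continuous ar alpha T /\ red_total alpha T ->
                weakly_m_continuous alpha T).
  { intros [Hpc Htot]. split; auto. intros l Hl Hlim.
    apply liminf_mlim with ar; eauto. apply Htot. left; auto. }
  assert (Hi2 : weakly_m_continuous alpha T ->
                weakly_p_continuous ar alpha T /\ red_total alpha T).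
  { intros [Htot Hmc]. split; auto. intros l Hl Hlim.
    apply mlim_liminf; eauto. }
  split; [tauto|].
  intros t. split.
  - intros [[Hpc Hli] [Htot Ht]]. split; [auto|]. split; auto.
    apply liminf_mlim with ar; auto.
  - intros [Hmc [Ht Hm]]. destruct (Hi2 Hmc) as [Hpc Htot].
    split; [split; auto|auto]. apply mlim_liminf; auto.
Qed.
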